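(* Let $p,q$ be $\{\circ,\wedge\}$-terms in the variables $X_1,\dots,X_n$, with $p$ regular and $q$ containing at most one occurrence of $\circ$. For a variety $\mathcal{V}$ the following are equivalent: (1) for every $\mathbf{A}\in\mathcal{V}$ and all compatible reflexive relations $R_1,\dots,R_n$ of $\mathbf{A}$, $p(R_1,\dots,R_n)\subseteq q(R_1,\dots,R_n)$; (2) for every $\mathbf{A}\in\mathcal{V}$ and all congruences $\alpha_1,\dots,\alpha_n$ of $\mathbf{A}$, $p(\alpha_1,\dots,\alpha_n)\subseteq q(\alpha_1,\dots,\alpha_n)$.
   Context: $\wedge$ is interpreted as intersection and $\circ$ as relational composition. A compatible reflexive relation of $\mathbf{A}$ is a reflexive subuniverse of $\mathbf{A}^2$. Regular terms: for a $\{\circ,\wedge\}$-term define $L_X=R_X=\{X\}$ for a variable $X$, $L_{q\circ r}=L_q$, $R_{q\circ r}=R_r$, $L_{q\wedge r}=L_q\cup L_r$, $R_{q\wedge r}=R_q\cup R_r$. The class of regular terms is the smallest class of $\{\circ,\wedge\}$-terms containing all variables, containing $q\circ r$ whenever $q,r$ are regular and $R_q\cap L_r=\emptyset$, and containing $q\wedge r$ whenever $q,r$ are regular, $L_q\cap L_r=\emptyset$ and $R_q\cap R_r=\emptyset$. *)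

(* Defs.v *)
From mathcomp Require Import all_boot.
Set Implicit Arguments. Unset Strict Implicit. Unset Printing Implicit Defensive.

Record signature := Signature { op_sym : Type; arity : op_sym -> nat }.

Record algebra (S : signature) := Algebra {
  carrier :> Type;
  interp : forall f : op_sym S, ('I_(arity f) -> carrier) -> carrier }.

Inductive term (S : signature) (V : Type) : Type :=
  | Var : V -> term S V
  | App : forall f : op_sym S, ('I_(arity f) -> term S V) -> term S V.

Fixpoint eval_term (S : signature) (V : Type) (A : algebra S) (v : V -> A)
    (t : term S V) {struct t} : A :=
  match t with
  | Var x => v x
  | App f ts => @interp S A f (fun i => @eval_term S V A v (ts i))
  end.

Definition identity (S : signature) := (term S nat * term S nat)%type.

(* A variety is an equational class: given by a set E of identities,
   its members are the algebras satisfying every identity of E. *)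
Definition in_variety (S : signature) (E : identity S -> Prop) (A : algebra S) : Prop :=
  forall e, E e -> forall v : nat -> A, @eval_term S nat A v e.1 = @eval_term S nat A v e.2.

Definition brel (T : Type) := T -> T -> Prop.

Definition rel_reflexive (T : Type) (R : brel T) : Prop := forall x, R x x.

Definition compatible (S : signature) (A : algebra S) (R : brel A) : Prop :=
  forall (f : op_sym S) (a b : 'I_(arity f) -> A),
    (forall i, R (a i) (b i)) -> R (@interp S A f a) (@interp S A f b).

Definition compatible_reflexive (S : signature) (A : algebra S) (R : brel A) : Prop :=
  rel_reflexive R /\ compatible R.

Definition congruence (S : signature) (A : algebra S) (R : brel A) : Prop :=
  [/\ rel_reflexive R, (forall x y, R x y -> R y x),
      (forall x y z, R x y -> R y z -> R x z) & compatible R].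

Inductive cmterm (n : nat) : Type :=
  | CVar : 'I_n -> cmterm n
  | CComp : cmterm n -> cmterm n -> cmterm n
  | CMeet : cmterm n -> cmterm n -> cmterm n.

Definition rcomp (T : Type) (R1 R2 : brel T) : brel T :=
  fun x y => exists z, R1 x z /\ R2 z y.

Definition rmeet (T : Type) (R1 R2 : brel T) : brel T :=
  fun x y => R1 x y /\ R2 x y.

Fixpoint cm_eval (n : nat) (T : Type) (Rs : 'I_n -> brel T) (t : cmterm n) : brel T :=
  match t with
  | CVar i => Rs i
  | CComp q r => rcomp (cm_eval Rs q) (cm_eval Rs r)
  | CMeet q r => rmeet (cm_eval Rs q) (cm_eval Rs r)
  end.

Fixpoint Lvars (n : nat) (t : cmterm n) : 'I_n -> Prop :=
  match t with
  | CVar i => fun j => j = i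
  | CComp q _ => Lvars q
  | CMeet q r => fun j => Lvars q j \/ Lvars r j
  end.

Fixpoint Rvars (n : nat) (t : cmterm n) : 'I_n -> Prop :=
  match t with
  | CVar i => fun j => j = i
  | CComp _ r => Rvars r
  | CMeet q r => fun j => Rvars q j \/ Rvars r j
  end.

Definition disjoint_vars (n : nat) (P Q : 'I_n -> Prop) : Prop :=
  forall j, ~ (P j /\ Q j).

Inductive regular (n : nat) : cmterm n -> Prop :=
  | reg_var : forall i, regular (CVar i)
  | reg_comp : forall q r, regular q -> regular r ->
      disjoint_vars (Rvars q) (Lvars r) -> regular (CComp q r)
  | reg_meet : forall q r, regular q -> regular r ->
      disjoint_vars (Lvars q) (Lvars r) -> disjoint_vars (Rvars q) (Rvars r) ->
      regular (CMeet q r).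

Fixpoint num_comp (n : nat) (t : cmterm n) : nat :=
  match t with
  | CVar _ => 0
  | CComp q r => (num_comp q + num_comp r).+1
  | CMeet q r => num_comp q + num_comp r
  end.

(* Main.v *)
Require Import Defs.
From mathcomp Require Import all_boot.
From Stdlib Require Import FunctionalExtensionality ProofIrrelevance.

Section Construction.
Variables (S : signature) (A : algebra S) (n : nat) (Rs : 'I_n -> brel A).
Hypothesis HR : forall i, compatible_reflexive (Rs i).

Definition D := option ('I_n * bool).
Definition memF (f : D -> A) := forall j,
  Rs j (f (Some (j,false))) (f None) /\ Rs j (f None) (f (Some (j,true))).
Definition Fc := {f : D -> A | memF f}.

Lemma memF_interp (o : op_sym S) (a : 'I_(arity o) -> Fc) :
  memF (fun d => @interp S A o (fun k => proj1_sig (a k) d)).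
Proof.
intro j; split; apply (proj2 (HR j)); intro k; apply (proj2_sig (a k) j).
Qed.

Definition Falg : algebra S :=
  {| carrier := Fc; interp := fun o a => exist _ _ (@memF_interp o a) |}.

Lemma Fc_eq (f g : Fc) : proj1_sig f = proj1_sig g -> f = g.
Proof.
destruct f as [f Hf], g as [g Hg]; simpl; intros ->; f_equal; apply proof_irrelevance.
Qed.

Lemma eval_F (v : nat -> Falg) (t : term S nat) :
  proj1_sig (@eval_term S nat Falg v t) =
  fun d => @eval_term S nat A (fun k => proj1_sig (v k) d) t.
Proof.
induction t as [x | o ts IH]; simpl. reflexivity.
apply functional_extensionality; intro d. f_equal.
apply functional_extensionality; intro k. rewrite IH. reflexivity.
Qed.

Lemma F_variety (E : identity S -> Prop) : in_variety E A -> in_variety E Falg.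
Proof.
intros HA e He v. apply Fc_eq. rewrite !eval_F.
apply functional_extensionality; intro d. apply HA; auto.
Qed.

Definition alpha (j : 'I_n) : brel Falg := fun f g =>
  proj1_sig f (Some (j,false)) = proj1_sig g (Some (j,false)) /\
  proj1_sig f (Some (j,true)) = proj1_sig g (Some (j,true)).

Lemma alpha_cong j : congruence (alpha j).
Proof.
split.
- intro x; split; reflexivity.
- intros x y [H1 H2]; split; auto.
- intros x y z [H1 H2] [H3 H4]; split; congruence.
- intros o a b H; split; simpl; f_equal; apply functional_extensionality;
  intro k; apply H.
Qed.

Fixpoint lb (t : cmterm n) : 'I_n -> bool :=
  match t with
  | CVar i => fun j => j == i
  | CComp q _ => lb q
  | CMeet q r => fun j => lb q j || lb r j
  end.
Fixpoint rb (t : cmterm n) : 'I_n -> bool :=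
  match t with
  | CVar i => fun j => j == i
  | CComp _ r => rb r
  | CMeet q r => fun j => rb q j || rb r j
  end.

Lemma lbP t j : Lvars t j <-> lb t j.
Proof.
induction t; simpl.
- split; [intros ->; apply eqxx | move/eqP; auto].
- auto.
- split; [case=> H; apply/orP; [left; apply/IHt1 | right; apply/IHt2]; auto
         | case/orP=> H; [left; apply/IHt1 | right; apply/IHt2]; auto].
Qed.
Lemma rbP t j : Rvars t j <-> rb t j.
Proof.
induction t; simpl.
- split; [intros ->; apply eqxx | move/eqP; auto].
- auto.
- split; [case=> H; apply/orP; [left; apply/IHt1 | right; apply/IHt2]; auto
         | case/orP=> H; [left; apply/IHt1 | right; apply/IHt2]; auto].
Qed.

Notation vf f := (proj1_sig f).

Lemma back0L m : num_comp m = 0 -> forall f z : Falg,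
  (forall j, vf f (Some (j,false)) = vf f None) ->
  cm_eval alpha m f z -> cm_eval Rs m (vf f None) (vf z None).
Proof.
induction m as [i|q IHq r IHr|q IHq r IHr]; simpl; intros H0 f z Hf H.
- destruct H as [H _]. rewrite -(Hf i) H. apply (proj1 (proj2_sig z i)).
- discriminate.
- move/eqP: H0; rewrite addn_eq0 => /andP [/eqP H1 /eqP H2].
  destruct H; split; eauto.
Qed.

Lemma back0R m : num_comp m = 0 -> forall z g : Falg,
  (forall j, vf g (Some (j,true)) = vf g None) ->
  cm_eval alpha m z g -> cm_eval Rs m (vf z None) (vf g None).
Proof.
induction m as [i|q IHq r IHr|q IHq r IHr]; simpl; intros H0 z g Hg H.
- destruct H as [_ H]. rewrite -(Hg i) -H. apply (proj2 (proj2_sig z i)).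
- discriminate.
- move/eqP: H0; rewrite addn_eq0 => /andP [/eqP H1 /eqP H2].
  destruct H; split; eauto.
Qed.

Lemma backQ q : (num_comp q <= 1)%N -> forall f g : Falg,
  (forall j, vf f (Some (j,false)) = vf f None) ->
  (forall j, vf g (Some (j,true)) = vf g None) ->
  cm_eval alpha q f g -> cm_eval Rs q (vf f None) (vf g None).
Proof.
induction q as [i|q IHq r IHr|q IHq r IHr]; intros H0 f g Hf Hg H.
- exact (@back0L (CVar i) erefl f g Hf H).
- simpl in H0. rewrite ltnS leqn0 addn_eq0 in H0. move/andP: H0 => [/eqP H1 /eqP H2].
  destruct H as [z [Hz1 Hz2]]. exists (vf z None); split.
  + exact (@back0L _ H1 f z Hf Hz1).
  + exact (@back0R _ H2 z g Hg Hz2).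
- simpl in H0. destruct H; split.
  + apply IHq; auto. apply: leq_trans _ H0; apply leq_addr.
  + apply IHr; auto. apply: leq_trans _ H0; apply leq_addl.
Qed.

Definition mkfun (x : A) (l r : 'I_n -> A) : D -> A := fun d =>
  match d with None => x | Some (j, false) => l j | Some (j, true) => r j end.

Lemma mk_mem x l r : (forall j, Rs j (l j) x) -> (forall j, Rs j x (r j)) ->
  memF (mkfun x l r).
Proof. intros H1 H2 j; split; simpl; auto. Qed.

Lemma refl j x : Rs j x x.
Proof. exact (proj1 (HR j) x). Qed.

Lemma forward p : regular p -> forall x y, cm_eval Rs p x y ->
  exists xR yL : 'I_n -> A, (forall j, Rs j x (xR j)) /\ (forall j, Rs j (yL j) y) /\
  forall ex ey : Falg, vf ex None = x -> vf ey None = y ->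
    (forall j, lb p j -> vf ex (Some (j,false)) = x /\ vf ex (Some (j,true)) = xR j) ->
    (forall j, rb p j -> vf ey (Some (j,true)) = y /\ vf ey (Some (j,false)) = yL j) ->
    cm_eval alpha p ex ey.
Proof.
intro Hreg; induction Hreg as [i|q r Hq IHq Hr IHr Hd|q r Hq IHq Hr IHr Hd1 Hd2].
- simpl; intros x y Hxy.
  exists (fun j => if j == i then y else x), (fun j => if j == i then x else y).
  split; [|split].
  + intro j; case: eqP => [->|_]; [exact Hxy | apply refl].
  + intro j; case: eqP => [->|_]; [exact Hxy | apply refl].
  + intros ex ey Hx Hy HL HRR.
    destruct (HL i (eqxx i)) as [H1 H2]. destruct (HRR i (eqxx i)) as [H3 H4].
    rewrite eqxx in H2 H4. split; congruence.
- simpl; intros x y [z [Hxz Hzy]].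
  destruct (IHq x z Hxz) as [xR [zL [H1 [H2 Hq']]]].
  destruct (IHr z y Hzy) as [zR [yL [H3 [H4 Hr']]]].
  exists xR, yL; split; [|split]; auto.
  intros ex ey Hx Hy HL HRR.
  pose zL' := fun j => if rb q j then zL j else z.
  pose zR' := fun j => if lb r j then zR j else z.
  have mem : memF (mkfun z zL' zR').
  { apply mk_mem; intro j; [unfold zL'; destruct (rb q j) | unfold zR'; destruct (lb r j)];
    auto; apply refl. }
  exists (exist _ _ mem : Falg). split.
  + apply Hq'; auto. intros j Hj; simpl; unfold zR', zL'.
    rewrite Hj. destruct (lb r j) eqn:E; [|auto].
    exfalso; apply (Hd j); split; [apply/rbP | apply/lbP]; auto.
  + apply Hr'; auto. intros j Hj; simpl; unfold zR', zL'.
    rewrite Hj. destruct (rb q j) eqn:E; [|auto].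
    exfalso; apply (Hd j); split; [apply/rbP | apply/lbP]; auto.
- simpl; intros x y [Hxq Hxr].
  destruct (IHq x y Hxq) as [xR1 [yL1 [H1 [H2 Hq']]]].
  destruct (IHr x y Hxr) as [xR2 [yL2 [H3 [H4 Hr']]]].
  exists (fun j => if lb q j then xR1 j else xR2 j),
         (fun j => if rb q j then yL1 j else yL2 j).
  split; [|split].
  + intro j; destruct (lb q j); auto.
  + intro j; destruct (rb q j); auto.
  + intros ex ey Hx Hy HL HRR; split.
    * apply Hq'; auto.
      -- intros j Hj; have [? E] := HL j (introT orP (or_introl Hj)). rewrite Hj in E; auto.
      -- intros j Hj; have [? E] := HRR j (introT orP (or_introl Hj)). rewrite Hj in E; auto.
    * apply Hr'; auto.
      -- intros j Hj; have [? E] := HL j (introT orP (or_intror Hj)).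
         destruct (lb q j) eqn:F; auto.
         exfalso; apply (Hd1 j); split; apply/lbP; auto.
      -- intros j Hj; have [? E] := HRR j (introT orP (or_intror Hj)).
         destruct (rb q j) eqn:F; auto.
         exfalso; apply (Hd2 j); split; apply/rbP; auto.
Qed.

End Construction.

Theorem theorem5p1 (S : signature) (E : identity S -> Prop) (n : nat)
    (p q : cmterm n) :
  regular p -> (num_comp q <= 1)%N ->
  ((forall (A : algebra S), in_variety E A ->
      forall Rs : 'I_n -> brel A, (forall i, compatible_reflexive (Rs i)) ->
      forall x y : A, cm_eval Rs p x y -> cm_eval Rs q x y)
   <->
   (forall (A : algebra S), in_variety E A ->
      forall alphas : 'I_n -> brel A, (forall i, congruence (alphas i)) ->
      forall x y : A, cm_eval alphas p x y -> cm_eval alphas q x y)).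
Proof.
intros Hreg Hq; split.
- intros H1 A HA al Hal x y Hp. apply H1; auto.
  intro i; destruct (Hal i) as [? ? ? ?]; split; auto.
- intros H2 A HA Rs HRs x y Hp.
  destruct (forward S A n Rs HRs p Hreg x y Hp) as [xR [yL [H1 [H1' Hf]]]].
  have mx : memF S A n Rs (mkfun S A n x (fun _ => x) xR).
  { apply mk_mem; auto; intro; apply (refl S A n Rs HRs). }
  have my : memF S A n Rs (mkfun S A n y yL (fun _ => y)).
  { apply mk_mem; auto; intro; apply (refl S A n Rs HRs). }
  pose ex := (exist _ _ mx : Falg S A n Rs HRs).
  pose ey := (exist _ _ my : Falg S A n Rs HRs).
  have Hpa : cm_eval (alpha S A n Rs HRs) p ex ey.
  { apply Hf; auto. }
  have Hqa := H2 (Falg S A n Rs HRs) (F_variety S A n Rs HRs E HA) (alpha S A n Rs HRs)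
             (alpha_cong S A n Rs HRs) ex ey Hpa.
  exact (backQ S A n Rs HRs q Hq ex ey (fun _ => erefl) (fun _ => erefl) Hqa).
Qed.
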